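(* Let $\Theta_i,\Theta_j,\Theta_k\in[0,\pi)$ satisfy $\cos\Theta_i+\cos\Theta_j\cos\Theta_k\ge0$, $\cos\Theta_j+\cos\Theta_k\cos\Theta_i\ge0$, $\cos\Theta_k+\cos\Theta_i\cos\Theta_j\ge0$. In hyperbolic geometry, for every $\epsilon>0$ there exists $L>0$ such that for all $r_i,r_j,r_k>0$ with $r_i>L$, the inner angle $\vartheta_i$ at the center of radius $r_i$ of the triangle of centers of three disks of radii $r_i,r_j,r_k$ meeting in exterior intersection angles $\Theta_i,\Theta_j,\Theta_k$ satisfies $\vartheta_i<\epsilon$. In particular $\lim_{r_i\to+\infty}\vartheta_i=0$ (uniformly in $r_j,r_k$).
   Context: The triangle is the hyperbolic triangle with side lengths $l_i,l_j,l_k$ given by $\cosh l_i=\cosh r_j\cosh r_k+\sinh r_j\sinh r_k\cos\Theta_i$ and cyclically; $\vartheta_i$ is the angle opposite $l_i$. *)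

(* Defs.v *)
From Stdlib Require Import Reals.
Open Scope R_scope.

Definition arcosh (x : R) : R := ln (x + sqrt (x * x - 1)).

(* length of the side joining the centers of the disks of radii ra, rb
   meeting with exterior intersection angle Th:
   cosh l = cosh ra cosh rb + sinh ra sinh rb cos Th *)
Definition side_len (ra rb Th : R) : R :=
  arcosh (cosh ra * cosh rb + sinh ra * sinh rb * cos Th).

(* inner angle opposite the side of length la in the hyperbolic triangle with
   side lengths la, lb, lc (hyperbolic law of cosines) *)
Definition hyp_angle (la lb lc : R) : R :=
  acos ((cosh lb * cosh lc - cosh la) / (sinh lb * sinh lc)).

(* inner angle vartheta_i at the center of radius ri of the triangle of centers
   of three disks with radii ri, rj, rk and exterior intersection angles
   Thi, Thj, Thk; l_i is opposite center i: cosh l_i = cosh r_j cosh r_k + ... *)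
Definition vartheta_i (ri rj rk Thi Thj Thk : R) : R :=
  let li := side_len rj rk Thi in
  let lj := side_len rk ri Thj in
  let lk := side_len ri rj Thk in
  hyp_angle li lj lk.

(* Main.v *)
Require Import Defs.
From Stdlib Require Import Reals Lra Psatz.
Open Scope R_scope.

Lemma hb (x : R) : 0 < x ->
  cosh x * cosh x - sinh x * sinh x = 1 /\ 0 < sinh x /\ x / 2 < cosh x /\ 1 <= cosh x.
Proof.
  intro Hx. unfold cosh, sinh. rewrite exp_Ropp.
  assert (Hu : 1 + x < exp x) by (apply exp_ineq1; lra).
  set (u := exp x) in *.
  assert (Hu0 : 0 < u) by lra.
  assert (Hv : u * / u = 1) by (field; lra).
  assert (Hv0 : 0 < / u) by (apply Rinv_0_lt_compat; lra).
  set (v := / u) in *.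
  repeat split; nra.
Qed.

Lemma hb0 (x : R) : 0 <= x -> cosh x * cosh x - sinh x * sinh x = 1 /\ 0 <= sinh x /\ 1 <= cosh x.
Proof.
  intro H. destruct (Req_dec x 0) as [->|].
  - unfold cosh, sinh. rewrite Ropp_0, exp_0. lra.
  - destruct (hb x) as (?&?&?&?); [lra|]. lra.
Qed.

Lemma arc (y : R) : 1 <= y ->
  cosh (arcosh y) = y /\ sinh (arcosh y) = sqrt (y * y - 1).
Proof.
  intro Hy. unfold arcosh.
  assert (Hs0 : 0 <= y * y - 1) by nra.
  assert (Hs : sqrt (y*y-1) * sqrt (y*y-1) = y*y-1) by (apply sqrt_sqrt; lra).
  assert (Hs1 : 0 <= sqrt (y*y-1)) by apply sqrt_pos.
  set (s := sqrt (y*y-1)) in *.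
  unfold cosh, sinh. rewrite exp_Ropp, exp_ln by lra.
  assert (E : / (y + s) = y - s).
  { apply Rmult_eq_reg_l with (y + s); [|lra]. rewrite Rinv_r by lra. nra. }
  rewrite E. split; field.
Qed.

Lemma ge1 (b c sb sc t : R) : 1 <= b -> 1 <= c -> 0 <= sb -> 0 <= sc ->
  b*b - sb*sb = 1 -> c*c - sc*sc = 1 -> -1 <= t <= 1 -> 1 <= b*c + sb*sc*t.
Proof.
  intros. assert (sb*sc <= b*c - 1).
  { destruct (Rle_lt_dec (sb*sc) (b*c-1)) as [|Hl]; [auto|].
    assert (0 <= b*c-1) by nra.
    assert ((b*c-1)*(b*c-1) < (sb*sc)*(sb*sc)) by (apply Rmult_le_0_lt_compat; lra). assert (E1: sb*sb = b*b-1) by lra. assert (E2: sc*sc = c*c-1) by lra. assert ((sb*sc)*(sb*sc) = (b*b-1)*(c*c-1)) by (rewrite <- E1, <- E2; ring). pose proof (Rle_0_sqr (b-c)) as Q; unfold Rsqr in Q. exfalso. nra. }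
  assert (0 <= sb*sc) by nra. nra.
Qed.

Lemma lowb (c a sc sa t : R) : 1 <= c -> 1 <= a -> 0 <= sc -> 0 <= sa ->
  c*c - sc*sc = 1 -> a*a - sa*sa = 1 -> -1 <= t <= 1 ->
  (1 + t)/2 * (c * a) <= c*a + sc*sa*t.
Proof.
  intros. assert (sc <= c) by nra. assert (sa <= a) by nra.
  assert (sc*sa <= c*a) by nra. assert (0 <= sc*sa) by nra.
  destruct (Rle_lt_dec 0 t); nra.
Qed.

Lemma sq_bounds (Y : R) : 2 <= Y -> Y/2 <= sqrt (Y*Y-1) <= Y.
Proof.
  intro. assert (Hs : sqrt (Y*Y-1) * sqrt (Y*Y-1) = Y*Y-1) by (apply sqrt_sqrt; nra).
  assert (0 <= sqrt (Y*Y-1)) by apply sqrt_pos.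
  set (s := sqrt (Y*Y-1)) in *. split; nra.
Qed.

Lemma key (X Y Z a b c K mj mk : R) : 0 < K -> 0 < mj -> 0 < mk -> 1 <= b -> 1 <= c ->
  X <= 2*b*c -> mj*(c*a) <= Y -> mk*(a*b) <= Z -> 2 <= Y -> 2 <= Z ->
  8 <= a*a*(K*mj*mk) -> 0 < a ->
  1 - K <= (Y*Z - X) / (sqrt (Y*Y-1) * sqrt (Z*Z-1)).
Proof.
  intros.
  destruct (sq_bounds Y) as [Y1 Y2]; auto.
  destruct (sq_bounds Z) as [Z1 Z2]; auto.
  set (sy := sqrt (Y*Y-1)) in *. set (sz := sqrt (Z*Z-1)) in *. clearbody sy sz.
  assert (P : 0 < sy*sz) by nra.
  apply Rmult_le_reg_r with (sy*sz); auto.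
  unfold Rdiv. rewrite Rmult_assoc, Rinv_l by lra. rewrite Rmult_1_r.
  assert (sy*sz <= Y*Z) by nra.
  assert (Y*Z/4 <= sy*sz) by nra.
  assert (mj*mk*(a*a)*(b*c) <= Y*Z).
  { assert (0 <= mj*(c*a)) by (apply Rmult_le_pos; [lra|apply Rmult_le_pos; lra]). assert (0 <= mk*(a*b)) by (apply Rmult_le_pos; [lra|apply Rmult_le_pos; lra]). assert (mj*(c*a)*(mk*(a*b)) <= Y*Z) by (apply Rmult_le_compat; lra). lra. }
  assert (2*(b*c) <= K*(Y*Z)/4).
  { assert (0 < b*c) by nra.
    assert (8*(b*c) <= a*a*(K*mj*mk)*(b*c)) by nra. nra. }
  nra.
Qed.

Lemma acos_small (e x : R) : 0 < e <= 1 -> cos e <= x -> acos x <= e.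
Proof.
  intros He Hx.
  assert (Hc : 0 < cos e) by (apply cos_gt_0; pose proof PI2_1; lra).
  destruct (Rle_lt_dec 1 x) as [H1|H1].
  - unfold acos. destruct (Rle_dec x (-1)); [lra|]. destruct (Rle_dec 1 x); lra.
  - destruct (Rle_lt_dec (acos x) e) as [|H2]; [auto|exfalso].
    pose proof (acos_bound x). pose proof PI2_1.
    assert (Hd : cos (acos x) < cos e) by (apply cos_decreasing_1; lra).
    rewrite cos_acos in Hd by lra. lra.
Qed.

Lemma cos_gt_m1 (t : R) : 0 <= t < PI -> -1 < cos t.
Proof.
  intros. rewrite <- cos_PI. apply cos_decreasing_1; lra.
Qed.

Theorem lemma1p6 (Thi Thj Thk : R) :
  0 <= Thi < PI -> 0 <= Thj < PI -> 0 <= Thk < PI ->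
  cos Thi + cos Thj * cos Thk >= 0 ->
  cos Thj + cos Thk * cos Thi >= 0 ->
  cos Thk + cos Thi * cos Thj >= 0 ->
  forall eps : R, eps > 0 ->
  exists L : R, L > 0 /\
    forall ri rj rk : R, ri > 0 -> rj > 0 -> rk > 0 -> ri > L ->
      vartheta_i ri rj rk Thi Thj Thk < eps.
Proof.
  intros Hi Hj Hk _ _ _ eps Heps.
  set (e := Rmin (eps/2) 1).
  assert (He : 0 < e <= 1) by (unfold e; split; [apply Rmin_pos; lra | apply Rmin_r]).
  assert (He2 : e < eps) by (unfold e; pose proof (Rmin_l (eps/2) 1); lra).
  set (K := 1 - cos e).
  assert (HK : 0 < K).
  { unfold K. rewrite <- cos_0 at 1. pose proof PI2_1.
    assert (cos e < cos 0) by (apply cos_decreasing_1; lra). lra. }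
  pose proof (cos_gt_m1 Thj Hj) as Cj1. pose proof (cos_gt_m1 Thk Hk) as Ck1.
  pose proof (COS_bound Thi) as Bi. pose proof (COS_bound Thj) as Bj.
  pose proof (COS_bound Thk) as Bk.
  set (mj := (1 + cos Thj)/2). set (mk := (1 + cos Thk)/2).
  assert (Hmj : 0 < mj) by (unfold mj; lra). assert (Hmk : 0 < mk) by (unfold mk; lra).
  assert (HP : 0 < K*mj*mk) by (apply Rmult_lt_0_compat; [apply Rmult_lt_0_compat|]; lra).
  assert (A1 : 0 < 16/(K*mj*mk)) by (apply Rdiv_lt_0_compat; lra).
  assert (A2 : 0 < 4/mj) by (apply Rdiv_lt_0_compat; lra).
  assert (A3 : 0 < 4/mk) by (apply Rdiv_lt_0_compat; lra).
  exists (16/(K*mj*mk) + 4/mj + 4/mk + 1). split; [lra|].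
  intros ri rj rk Hri Hrj Hrk HL.
  destruct (hb ri Hri) as (Ea & Sa & Ga & Oa).
  destruct (hb rj Hrj) as (Eb & Sb & Gb & Ob).
  destruct (hb rk Hrk) as (Ec & Sc & Gc & Oc).
  unfold vartheta_i, hyp_angle, side_len; cbv zeta.
  set (a := cosh ri) in *. set (b := cosh rj) in *. set (c := cosh rk) in *.
  set (sa := sinh ri) in *. set (sb := sinh rj) in *. set (sc := sinh rk) in *.
  assert (Li : 1 <= b*c + sb*sc*cos Thi) by (apply ge1; lra).
  assert (Lj : 1 <= c*a + sc*sa*cos Thj) by (apply ge1; lra).
  assert (Lk : 1 <= a*b + sa*sb*cos Thk) by (apply ge1; lra).
  destruct (arc _ Li) as [Ri Ri']. destruct (arc _ Lj) as [Rj Rj'].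
  destruct (arc _ Lk) as [Rk Rk'].
  rewrite Ri, Rj, Rk, Rj', Rk'.
  eapply Rle_lt_trans; [apply acos_small; [exact He|] | exact He2].
  fold K. replace (cos e) with (1 - K) by (unfold K; ring).
  assert (Wj := lowb c a sc sa (cos Thj) ltac:(lra) ltac:(lra) ltac:(lra) ltac:(lra) Ec Ea ltac:(lra)).
  assert (Wk := lowb a b sa sb (cos Thk) ltac:(lra) ltac:(lra) ltac:(lra) ltac:(lra) Ea Eb ltac:(lra)).
  fold mj in Wj. fold mk in Wk.
  assert (Ha : 16/(K*mj*mk)/2 + 4/mj/2 < a) by lra.
  assert (Ha1 : 8 <= a*(K*mj*mk)).
  { assert (16/(K*mj*mk)/2*(K*mj*mk) = 8) by (field; lra).
    assert (16/(K*mj*mk)/2*(K*mj*mk) <= a*(K*mj*mk)) by (apply Rmult_le_compat_r; lra). lra. }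
  assert (Ha2 : 2 <= a*mj).
  { assert (4/mj/2*mj = 2) by (field; lra).
    assert (4/mj/2*mj <= a*mj) by (apply Rmult_le_compat_r; lra). lra. }
  assert (Ha3 : 2 <= a*mk).
  { assert (4/mk/2*mk = 2) by (field; lra).
    assert (4/mk/2*mk <= a*mk) by (apply Rmult_le_compat_r; lra). lra. }
  apply (key _ _ _ a b c K mj mk); try lra.
  - assert (sb <= b) by nra. assert (sc <= c) by nra.
    assert (sb*sc <= b*c) by (apply Rmult_le_compat; lra).
    assert (0 <= sb*sc) by (apply Rmult_le_pos; lra).
    assert (sb*sc*cos Thi <= sb*sc) by (rewrite <- (Rmult_1_r (sb*sc)) at 2; apply Rmult_le_compat_l; lra).
    lra.
  - assert (c*a*mj >= a*mj) by nra. lra.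
  - assert (a*b*mk >= a*mk) by nra. lra.
  - assert (a*a*(K*mj*mk) >= a*(K*mj*mk)) by nra. lra.
Qed.
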